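(* Let $X$ be a uniformly discrete metric space of bounded geometry which has property A. Then $\inf_{S>0}\epsilon_{X;1}(S)=0$.
   Context: A metric space is uniformly discrete if there is $r>0$ such that $d(x,y)<r$ implies $x=y$. For a metric space $(X,d)$ and $1\le p<\infty$, $\ell^p(X)$ is the space of $p$-summable real functions on $X$ and $\ell^p_1(X)$ its unit sphere. For a map $\xi\colon X\to\ell^p(X)$, written $x\mapsto\xi_x$, put $S(\xi)=\sup\{d(x,y):\xi_x(y)\neq0\}$ and $\varepsilon(\xi;p)=\sup_{x\ne y}\|\xi_x-\xi_y\|_p/d(x,y)$. The profile is $\epsilon_{X;p}(S)=\inf\{\varepsilon(\xi;p):\xi\colon X\to\ell^p_1(X),\ S(\xi)\le S\}$. A metric space has bounded geometry if for every $R$ there is $C$ such that every $R$-ball has at most $C$ points. A discrete metric space $X$ of bounded geometry has property A if for every $R>0$ and $\epsilon>0$ there is $\xi\colon X\to\ell^1_1(X)$ with $S(\xi)<\infty$ and $\|\xi_x-\xi_y\|_1\le\epsilon$ whenever $d(x,y)\le R$. *)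

(* Defs.v *)
From Stdlib Require Import Reals List.
From Coquelicot Require Import Coquelicot.
Open Scope R_scope.

Section Defs.
Context {X : Type}.

Definition is_metric (d : X -> X -> R) : Prop :=
  (forall x y, 0 <= d x y) /\
  (forall x y, d x y = 0 <-> x = y) /\
  (forall x y, d x y = d y x) /\
  (forall x y z, d x z <= d x y + d y z).

Definition uniformly_discrete (d : X -> X -> R) : Prop :=
  exists r, 0 < r /\ forall x y, d x y < r -> x = y.

Definition bounded_geometry (d : X -> X -> R) : Prop :=
  forall Rad : R, exists C : nat, forall (x : X) (l : list X),
    NoDup l -> (forall y, In y l -> d x y <= Rad) -> (length l <= C)%nat.

Definition abs_sum (f : X -> R) (l : list X) : R :=
  fold_right (fun y acc => Rabs (f y) + acc) 0 l.

(* the l^1 norm: sup over finite subsets of sum of |f|; +oo if f is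
   not summable *)
Definition l1norm (f : X -> R) : Rbar :=
  Lub_Rbar (fun s => exists l : list X, NoDup l /\ s = abs_sum f l).

Definition in_l1_sphere (f : X -> R) : Prop := l1norm f = Finite 1.

Definition xi_S (d : X -> X -> R) (xi : X -> X -> R) : Rbar :=
  Lub_Rbar (fun r => exists x y, xi x y <> 0 /\ r = d x y).

(* eps(xi;1) = sup_{x<>y} ||xi_x - xi_y||_1 / d(x,y); the value 0 is
   adjoined so that the sup over an empty index set (|X| <= 1) is 0 *)
Definition xi_eps1 (d : X -> X -> R) (xi : X -> X -> R) : Rbar :=
  Lub_Rbar (fun r => r = 0 \/ exists x y (n : R), x <> y /\
      l1norm (fun z => xi x z - xi y z) = Finite n /\ r = n / d x y).

Definition profile1 (d : X -> X -> R) (S : R) : Rbar :=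
  Glb_Rbar (fun e => exists xi : X -> X -> R,
      (forall x, in_l1_sphere (xi x)) /\
      Rbar_le (xi_S d xi) (Finite S) /\
      xi_eps1 d xi = Finite e).

Definition property_A (d : X -> X -> R) : Prop :=
  forall Rad eps : R, 0 < Rad -> 0 < eps ->
    exists xi : X -> X -> R,
      (forall x, in_l1_sphere (xi x)) /\
      Rbar_lt (xi_S d xi) p_infty /\
      (forall x y, d x y <= Rad ->
          Rbar_le (l1norm (fun z => xi x z - xi y z)) (Finite eps)).

End Defs.

(* Main.v *)
Require Import Defs.
From Stdlib Require Import Reals List Lra.
From Coquelicot Require Import Coquelicot.
Open Scope R_scope.

Lemma lub_fin (E : R -> Prop) a B : E a -> (forall x, E x -> x <= B) ->
  exists e, Lub_Rbar E = Finite e /\ a <= e <= B.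
Proof.
  intros Ha HB. destruct (Lub_Rbar_correct E) as [Hub Hl].
  assert (H1 := Hub a Ha). assert (H2 := Hl (Finite B) HB).
  destruct (Lub_Rbar E); simpl in *; try contradiction. eauto.
Qed.

Lemma glb_fin (E : R -> Prop) a : E a -> (forall x, E x -> 0 <= x) ->
  exists e, Glb_Rbar E = Finite e /\ 0 <= e <= a.
Proof.
  intros Ha HB. destruct (Glb_Rbar_correct E) as [Hlb Hl].
  assert (H1 := Hlb a Ha). assert (H2 := Hl (Finite 0) HB).
  destruct (Glb_Rbar E); simpl in *; try contradiction. eauto.
Qed.

Lemma l1_le {X : Type} (f : X -> R) l : in_l1_sphere f -> NoDup l -> abs_sum f l <= 1.
Proof.
  intros H Hl. destruct (Lub_Rbar_correct (fun s => exists l : list X, NoDup l /\ s = abs_sum f l)) as [Hub _].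
  unfold in_l1_sphere, l1norm in H. rewrite H in Hub.
  apply (Hub (abs_sum f l)). eauto.
Qed.

Lemma l1_bound {X : Type} (f : X -> R) M :
  (forall l, NoDup l -> abs_sum f l <= M) -> Rbar_le (l1norm f) (Finite M).
Proof.
  intros H. destruct (Lub_Rbar_correct (fun s => exists l : list X, NoDup l /\ s = abs_sum f l)) as [_ Hl].
  apply Hl. intros x [l [Hn ->]]. simpl. auto.
Qed.

Lemma abs_sum_sub {X : Type} (f g : X -> R) l :
  abs_sum (fun z => f z - g z) l <= abs_sum f l + abs_sum g l.
Proof.
  induction l as [|a l IH]; simpl. lra.
  pose proof (Rabs_triang (f a) (- g a)). rewrite Rabs_Ropp in H.
  unfold Rminus. unfold Rminus in IH. lra.
Qed.

Theorem proposition2p1p7 (X : Type) (d : X -> X -> R) :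
  is_metric d -> uniformly_discrete d -> bounded_geometry d -> property_A d ->
  Glb_Rbar (fun v => exists S : R, 0 < S /\ profile1 d S = Finite v) = Finite 0.
Proof.
  intros [Hd0 [Hdeq [Hsym Htri]]] [r [Hr Hud]] _ HA.
  set (V := fun v => exists S : R, 0 < S /\ profile1 d S = Finite v).
  assert (Hlow : forall v, V v -> 0 <= v).
  { intros v [S [_ HS]]. unfold profile1 in HS.
    destruct (Glb_Rbar_correct (fun e => exists xi : X -> X -> R,
      (forall x, in_l1_sphere (xi x)) /\ Rbar_le (xi_S d xi) (Finite S) /\
      xi_eps1 d xi = Finite e)) as [_ Hl].
    rewrite HS in Hl. apply (Hl (Finite 0)).
    intros e [xi [_ [_ He]]]. unfold xi_eps1 in He.
    destruct (Lub_Rbar_correct (fun r => r = 0 \/ exists x y (n : R), x <> y /\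
      l1norm (fun z => xi x z - xi y z) = Finite n /\ r = n / d x y)) as [Hub _].
    rewrite He in Hub. apply (Hub 0). auto. }
  assert (Hsmall : forall delta, 0 < delta -> exists v, V v /\ v <= delta).
  { intros delta Hdel.
    destruct (HA (4 / delta) (delta * r / 2)) as [xi [Hsph [HS Hclose]]].
    { apply Rdiv_lt_0_compat; lra. }
    { apply Rmult_lt_0_compat; [apply Rmult_lt_0_compat|]; lra. }
    set (B := delta).
    assert (Hb : forall e, (e = 0 \/ exists x y (n : R), x <> y /\
      l1norm (fun z => xi x z - xi y z) = Finite n /\ e = n / d x y) -> e <= B).
    { intros e [->|[x [y [n [Hxy [Hn ->]]]]]]. unfold B; lra.
      assert (Hdp : r <= d x y).
      { destruct (Rlt_or_le (d x y) r) as [h|h]; auto. exfalso; apply Hxy; auto. }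
      assert (Hdpos : 0 < d x y) by lra.
      assert (Hn2 : n <= 2).
      { assert (Rbar_le (l1norm (fun z => xi x z - xi y z)) (Finite 2)).
        { apply l1_bound. intros l Hl.
          pose proof (abs_sum_sub (xi x) (xi y) l).
          pose proof (l1_le _ l (Hsph x) Hl). pose proof (l1_le _ l (Hsph y) Hl). lra. }
        rewrite Hn in H. exact H. }
      apply Rle_div_l; auto. unfold B.
      destruct (Rle_or_lt (d x y) (4 / delta)) as [h|h].
      - specialize (Hclose x y h). rewrite Hn in Hclose. simpl in Hclose.
        apply Rle_trans with (delta * r / 2); auto.
        assert (delta * r <= delta * d x y) by (apply Rmult_le_compat_l; lra).
        assert (0 < delta * r) by (apply Rmult_lt_0_compat; lra). lra.
      - assert (delta * (4/delta) < delta * d x y) by (apply Rmult_lt_compat_l; lra).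
        replace (delta * (4/delta)) with 4 in H by (field; lra). lra. }
    destruct (lub_fin _ 0 B (or_introl eq_refl) Hb) as [e [He [He0 HeB]]].
    set (S0 := match xi_S d xi with Finite s => Rmax s 1 | _ => 1 end).
    assert (HS0 : 0 < S0).
    { unfold S0. destruct (xi_S d xi); try lra. pose proof (Rmax_r r0 1); lra. }
    assert (HSle : Rbar_le (xi_S d xi) (Finite S0)).
    { unfold S0. destruct (xi_S d xi); simpl in *; try tauto. apply Rmax_l. }
    destruct (glb_fin (fun e => exists xi : X -> X -> R,
      (forall x, in_l1_sphere (xi x)) /\ Rbar_le (xi_S d xi) (Finite S0) /\
      xi_eps1 d xi = Finite e) e) as [v [Hv [Hv0 Hve]]].
    { exists xi. split; auto. }
    { intros x [xi' [_ [_ Hx]]]. unfold xi_eps1 in Hx.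
      destruct (Lub_Rbar_correct (fun r => r = 0 \/ exists x y (n : R), x <> y /\
        l1norm (fun z => xi' x z - xi' y z) = Finite n /\ r = n / d x y)) as [Hub _].
      rewrite Hx in Hub. apply (Hub 0). auto. }
    exists v. split. exists S0. split; auto. unfold B in *; lra. }
  apply is_glb_Rbar_unique. split.
  - intros x Hx. simpl. auto.
  - intros b Hb. destruct b as [b| |]; simpl; auto.
    + destruct (Rle_or_lt b 0) as [h|h]; auto.
      destruct (Hsmall (b/2)) as [v [Hv Hvb]]; [lra|].
      specialize (Hb v Hv). simpl in Hb. lra.
    + destruct (Hsmall 1) as [v [Hv _]]; [lra|]. exact (Hb v Hv).
Qed.
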